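(* Let $V$ and $H$ be real Hilbert spaces with scalar products $(\cdot,\cdot)_V$, $(\cdot,\cdot)_H$ and norms $\|\cdot\|_V$, $\|\cdot\|_H$, and let $\gamma:V\to H$ be a continuous, linear and compact operator. Let $\lambda_1\le\lambda_2\le\dots$ be the eigenvalues of the problem: find $\lambda\in\mathbb{R}$, $u\in V$, $u\ne0$, with $(u,v)_V=\lambda(\gamma u,\gamma v)_H$ for all $v\in V$, and let $C_\gamma$ be the smallest constant such that $\|\gamma v\|_H\le C_\gamma\|v\|_V$ for all $v\in V$. Let $u_*\in V$ and $\lambda_*\in\mathbb{R}$ be arbitrary and let $w\in V$ satisfy $(w,v)_V=(u_*,v)_V-\lambda_*(\gamma u_*,\gamma v)_H$ for all $v\in V$. Assume that $$\left|\frac{\lambda_1-\lambda_*}{\lambda_1}\right|\le\left|\frac{\lambda_i-\lambda_*}{\lambda_i}\right|\quad\forall i=1,2,\dots.$$ Further let $A\ge0$ and $B\ge0$ satisfy $B<\lambda_*\|\gamma u_*\|_H$ and $\|w\|_V\le A+C_\gamma B$. Then $$X_2^2\le\lambda_1\quad\text{and}\quad C_\gamma\le 1/X_2,$$ where $$X_2=\tfrac12\left(-\alpha+\sqrt{\alpha^2+4(\lambda_*-\beta)}\right),\qquad \alpha=\frac{A}{\|\gamma u_*\|_H},\qquad \beta=\frac{B}{\|\gamma u_*\|_H}.$$ *)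

(* Defs.v *)
From HB Require Import structures.
From mathcomp Require Import all_boot all_order all_algebra.
From mathcomp Require Import all_classical all_reals all_analysis.
Set Implicit Arguments. Unset Strict Implicit. Unset Printing Implicit Defensive.
Import Order.TTheory GRing.Theory Num.Theory.
Import numFieldNormedType.Exports.
Local Open Scope classical_set_scope.
Local Open Scope ring_scope.

(* Together with completeness of V (completeNormedModType), V is a real
   Hilbert space. *)
Definition is_inner_product (R : realType) (V : normedModType R)
    (ip : V -> V -> R) : Prop :=
  [/\ (forall (a : R) (u v w : V), ip (a *: u + v) w = a * ip u w + ip v w),
      (forall u v : V, ip u v = ip v u)
    & (forall v : V, `|v| = Num.sqrt (ip v v))].

Definition compact_operator (R : realType) (V H : normedModType R)
    (g : V -> H) : Prop :=
  forall A : set V, bounded_set A -> compact (closure (g @` A)).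

Definition is_eigenvalue (R : realType) (V H : normedModType R)
    (ipV : V -> V -> R) (ipH : H -> H -> R) (g : V -> H) (lam : R) : Prop :=
  exists2 u : V, u != 0 & forall v : V, ipV u v = lam * ipH (g u) (g v).

Definition is_smallest_bound (R : realType) (V H : normedModType R)
    (g : V -> H) (C : R) : Prop :=
  (forall v : V, `|g v| <= C * `|v|) /\
  (forall C' : R, (forall v : V, `|g v| <= C' * `|v|) -> C <= C').

(* Main.v *)
Require Import Defs.
From HB Require Import structures.
From mathcomp Require Import all_boot all_order all_algebra.
From mathcomp Require Import all_classical all_reals all_analysis.
From mathcomp Require Import ring lra.
Import Order.TTheory GRing.Theory Num.Theory.
Import numFieldNormedType.Exports.
Local Open Scope classical_set_scope.
Local Open Scope ring_scope.
Set Implicit Arguments. Unset Strict Implicit. Unset Printing Implicit Defensive.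

Section Bil.
Variables (R : realType) (V : lmodType R).

Definition sbil (b : V -> V -> R) :=
  (forall (a : R) (u v w : V), b (a *: u + v) w = a * b u w + b v w) /\
  (forall u v, b u v = b v u).

Variable b : V -> V -> R.
Hypothesis hb : sbil b.

Lemma sb0l w : b 0 w = 0.
Proof.
have := hb.1 1 0 0 w; rewrite scaler0 addr0 mul1r => h.
by have := h; lra.
Qed.

Lemma sbDl u v w : b (u + v) w = b u w + b v w.
Proof. by have := hb.1 1 u v w; rewrite scale1r mul1r. Qed.

Lemma sbZl a u w : b (a *: u) w = a * b u w.
Proof. by have := hb.1 a u 0 w; rewrite addr0 sb0l addr0. Qed.

Lemma sbNl u w : b (- u) w = - b u w.
Proof. by rewrite -scaleN1r sbZl mulN1r. Qed.

Lemma sbBl u v w : b (u - v) w = b u w - b v w.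
Proof. by rewrite sbDl sbNl. Qed.

Lemma sbDr u v w : b w (u + v) = b w u + b w v.
Proof. by rewrite hb.2 sbDl !(hb.2 w). Qed.

Lemma sbZr a u w : b w (a *: u) = a * b w u.
Proof. by rewrite hb.2 sbZl (hb.2 w). Qed.

Lemma sbNr u w : b w (- u) = - b w u.
Proof. by rewrite hb.2 sbNl (hb.2 w). Qed.

Lemma sbBr u v w : b w (u - v) = b w u - b w v.
Proof. by rewrite sbDr sbNr. Qed.

Lemma sb0r w : b w 0 = 0.
Proof. by rewrite hb.2 sb0l. Qed.

Lemma sb_expand u x t :
  b (u + t *: x) (u + t *: x) = b u u + 2 * t * b u x + t ^+ 2 * b x x.
Proof.
rewrite !sbDl !sbDr !sbZl !sbZr (hb.2 x u); ring.
Qed.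

Lemma sb_par u v : b (u - v) (u - v) + b (u + v) (u + v) = 2 * b u u + 2 * b v v.
Proof.
rewrite !sbBl !sbDl !sbBr !sbDr (hb.2 v u); ring.
Qed.

Lemma quad_nonneg (A B C : R) : 0 <= C ->
  (forall t, 0 <= A + 2 * t * B + t ^+ 2 * C) -> B ^+ 2 <= A * C.
Proof.
move=> C0 h.
have [Cz|Cp] := eqVneq C 0.
  subst C.
  have [Bz|Bn] := eqVneq B 0; first by subst B; rewrite expr0n /= mulr0.
  have := h (- (A + 1) / (2 * B)).
  have -> : 2 * (- (A + 1) / (2 * B)) * B = - (A + 1).
    by field.
  rewrite mulr0; lra.
have Cpos : 0 < C by rewrite lt_def Cp C0.
have := h (- B / C).
have -> : A + 2 * (- B / C) * B + (- B / C) ^+ 2 * C = A - B ^+ 2 / C.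
  by field; rewrite lt0r_neq0.
rewrite subr_ge0 ler_pdivrMr //.
Qed.

Lemma psd_cs u x : (forall y, 0 <= b y y) -> b u x ^+ 2 <= b u u * b x x.
Proof.
move=> hp; apply: quad_nonneg => // t.
by rewrite -sb_expand.
Qed.

Lemma psd_par u v : (forall y, 0 <= b y y) -> b (u - v) (u - v) <= 2 * b u u + 2 * b v v.
Proof. move=> hp; have := sb_par u v; have := hp (u + v); lra. Qed.

End Bil.

Section Sq.
Variable R : realFieldType.
Lemma sq_le (x y : R) : 0 <= y -> x ^+ 2 <= y ^+ 2 -> x <= y.
Proof.
move=> y0 h; have [x0|x0] := lerP 0 x.
  by rewrite -(@ler_pXn2r _ 2) ?nnegrE.
exact: le_trans (ltW x0) y0.
Qed.
Lemma sq_lt (x y : R) : 0 <= x -> 0 <= y -> x ^+ 2 < y ^+ 2 -> x < y.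
Proof. by move=> x0 y0 h; rewrite -(@ltr_pXn2r _ 2) ?nnegrE. Qed.
Lemma le_sq (x y : R) : 0 <= x -> x <= y -> x ^+ 2 <= y ^+ 2.
Proof. by move=> x0 xy; rewrite !expr2 ler_pM. Qed.
End Sq.


Section IP.
Variables (R : realType) (V : normedModType R) (ip : V -> V -> R).
Hypothesis hip : is_inner_product ip.

Lemma ip_sbil : sbil ip.
Proof. by case: hip => h1 h2 _; split. Qed.

Lemma ip_nn v : 0 <= ip v v.
Proof.
case: hip => _ _ h3.
rewrite leNgt; apply/negP => hneg.
have : `|v| = 0 by rewrite h3 ltr0_sqrtr.
move/eqP; rewrite normr_eq0 => /eqP v0.
by move: hneg; rewrite v0 (sb0l ip_sbil) ltxx.
Qed.

Lemma ip_norm v : ip v v = `|v| ^+ 2.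
Proof. by case: hip => _ _ h3; rewrite h3 sqr_sqrtr // ip_nn. Qed.

Lemma ip_cs u v : `|ip u v| <= `|u| * `|v|.
Proof.
have h := psd_cs ip_sbil u v ip_nn.
rewrite !ip_norm in h.
rewrite -(@ler_pXn2r _ 2) ?nnegrE ?mulr_ge0 //.
by rewrite exprMn real_normK ?num_real.
Qed.

Lemma ip_nondeg z : (forall x, ip z x = 0) -> z = 0.
Proof.
move=> h; have := h z; rewrite ip_norm => /eqP.
by rewrite sqrf_eq0 normr_eq0 => /eqP.
Qed.

End IP.


Section Max.
Variables (R : realType) (V : completeNormedModType R) (H : normedModType R).
Variables (ipV : V -> V -> R) (gam : V -> H).
Hypothesis hipV : is_inner_product ipV.
Hypothesis gam_lin : linear gam.
Hypothesis gam_comp : compact_operator gam.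

Lemma gam0 : gam 0 = 0.
Proof.
have := gam_lin 1 0 0; rewrite !scale1r addr0 => h.
by apply: (addrI (gam 0)); rewrite addr0 -h.
Qed.

Lemma gamB u v : gam (u - v) = gam u - gam v.
Proof.
have h := gam_lin (-1) v u; rewrite !scaleN1r in h.
by rewrite addrC h addrC.
Qed.

Lemma inv_succ_pos (n : nat) : 0 < (n.+1%:R : R)^-1.
Proof. by rewrite invr_gt0 ltr0n. Qed.

Lemma inv_succ_le1 (n : nat) : (n.+1%:R : R)^-1 <= 1.
Proof. by rewrite invr_le1 ?ler1n ?ltr0n // unitfE pnatr_eq0. Qed.

Lemma inv_succ_mono (m n : nat) : (m <= n)%N -> (n.+1%:R : R)^-1 <= (m.+1%:R)^-1.
Proof. by move=> mn; rewrite lef_pV2 ?posrE ?ltr0n // ler_nat ltnS. Qed.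

Lemma maxlemma (b : V -> V -> R) (M L : R) (u0 : V) :
  sbil b -> (forall u, `|b u u| <= M * `|u| ^+ 2) ->
  (forall u, b u u <= L * `|gam u| ^+ 2) -> 0 < b u0 u0 ->
  exists sig, exists2 v, v != 0 &
    [/\ 0 < sig, (forall u, b u u <= sig * `|u| ^+ 2)
      & (forall x, b v x = sig * ipV v x)].
Proof.
move=> hb hM hL hu0.
pose S := [set r | exists2 u : V, `|u| <= 1 & r = b u u].
have hS : has_sup S.
  split; first by exists (b 0 0), 0; rewrite ?normr0.
  exists `|M| => r [u hu ->].
  have h1 := hM u; have h2 := ler_norm (b u u); have h3 := ler_norm M.
  have h4 : `|u| ^+ 2 <= 1 by rewrite expr_le1.
  have h5 : 0 <= `|u| ^+ 2 by rewrite exprn_ge0.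
  have h6 : M * `|u| ^+ 2 <= `|M| * `|u| ^+ 2 by rewrite ler_wpM2r.
  have h7 : `|M| * `|u| ^+ 2 <= `|M| by rewrite ler_piMr.
  lra.
pose sig := sup S.
have hbnd : forall u, b u u <= sig * `|u| ^+ 2.
  move=> u; have [->|un] := eqVneq u 0.
    by rewrite (sb0l hb) normr0 expr0n /= mulr0.
  set n := `|u|; have np : 0 < n by rewrite normr_gt0.
  have nn0 : n != 0 by rewrite gt_eqF.
  have hle : b (n^-1 *: u) (n^-1 *: u) <= sig.
    apply: (sup_upper_bound hS).
    exists (n^-1 *: u) => //.
    rewrite normrZ -/n ger0_norm; last by rewrite invr_ge0 ltW.
    by rewrite mulVf.
  rewrite (sbZl hb) (sbZr hb) in hle.
  have -> : b u u = n ^+ 2 * (n^-1 * (n^-1 * b u u)).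
    by field.
  by rewrite mulrC ler_wpM2r // exprn_ge0 // ltW.
have sigp : 0 < sig.
  have h1 := hbnd u0; have h2 : 0 <= `|u0| ^+ 2 := exprn_ge0 2 (normr_ge0 u0).
  rewrite ltNge; apply/negP => sn.
  have : sig * `|u0| ^+ 2 <= 0 by rewrite mulr_le0_ge0.
  lra.
pose p u x := sig * ipV u x - b u x.
have hp : sbil p.
  split.
    move=> a u v w; rewrite /p (ip_sbil hipV).1 hb.1; ring.
  by move=> u v; rewrite /p (ip_sbil hipV).2 hb.2.
have pnn : forall y, 0 <= p y y.
  by move=> y; rewrite /p (ip_norm hipV); have := hbnd y; lra.
have pbound : forall y, p y y <= (sig + `|M|) * `|y| ^+ 2.
  move=> y; rewrite /p (ip_norm hipV).
  have h1 := hM y; have h2 := ler_norm (- b y y); rewrite normrN in h2.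
  have h3 : M * `|y| ^+ 2 <= `|M| * `|y| ^+ 2 by rewrite ler_wpM2r ?exprn_ge0 ?ler_norm.
  lra.
pose e (n : nat) : R := (n.+1%:R)^-1.
have approx : forall n : nat, exists u, `|u| <= 1 /\ sig - e n < b u u.
  move=> n; have [r [u hu ->] hr] := sup_adherent (inv_succ_pos n) hS.
  by exists u.
have [vs hvs] := choice approx.
have [h hcl] : exists h, forall (eps : R) (N : nat), 0 < eps ->
    exists n, (N <= n)%N /\ `|h - gam (vs n)| < eps.
  have bnd : bounded_set [set u : V | `|u| <= 1].
    exists 1; split; first exact: num_real.
    move=> M0 hM0 x /= hx; apply: le_trans hx _; exact: ltW.
  pose F := (fun n => gam (vs n)) @ \oo.
  have PF : ProperFilter F by rewrite /F; typeclasses eauto.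
  have FC : F (closure (gam @` [set u : V | `|u| <= 1])).
    rewrite /F /fmap /=; apply: filterE => n /=; apply: subset_closure; exists (vs n) => //.
    exact: (hvs n).1.
  have [h [_ hh]] := gam_comp bnd PF FC.
  exists h => eps N epsp.
  have := hh [set y | exists n, (N <= n)%N /\ y = gam (vs n)] (ball h eps) _ (nbhsx_ballx h eps epsp).
  move=> H0; have [|y [[n [hn ey]] hy]] := H0.
    rewrite /F /fmap /=; apply: filterS (nbhs_infty_ge N) => n hn /=; by exists n.
  exists n; split => //; move: hy; rewrite ey -ball_normE /ball_ /=.
  by [].
have [us hus] : exists us : nat -> V, forall k,
    [/\ `|us k| <= 1, sig - e k < b (us k) (us k) & `|h - gam (us k)| < e k].
  have : forall k, exists u,
      [/\ `|u| <= 1, sig - e k < b u u & `|h - gam u| < e k].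
    move=> k; have [n [kn hn]] := hcl (e k) k (inv_succ_pos k).
    exists (vs n); have [h1 h2] := hvs n; split => //.
    move: (inv_succ_mono kn) => hh; apply: le_lt_trans h2; rewrite lerD2l lerN2; exact: hh.
  by move=> /choice [us hus]; exists us.
have pus : forall k, p (us k) (us k) < e k.
  move=> k; have [h1 h2 _] := hus k; rewrite /p (ip_norm hipV).
  have h3 : `|us k| ^+ 2 <= 1 by rewrite expr_le1.
  have h4 : sig * `|us k| ^+ 2 <= sig by rewrite ler_piMr // ltW.
  lra.
have cauchyb : forall i j, sig * `|us i - us j| ^+ 2 <=
    2 * e i + 2 * e j + `|L| * (e i + e j) ^+ 2.
  move=> i j; set d := us i - us j.
  have e1 : sig * `|d| ^+ 2 = p d d + b d d by rewrite /p (ip_norm hipV); ring.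
  have e2 := psd_par hp (us i) (us j) pnn.
  have e3 : b d d <= `|L| * `|gam d| ^+ 2.
    by apply: le_trans (hL d) _; rewrite ler_wpM2r ?exprn_ge0 ?ler_norm.
  have e4 : `|gam d| <= e i + e j.
    rewrite /d gamB.
    rewrite (_ : gam (us i) - gam (us j) = - (h - gam (us i)) + (h - gam (us j))); last first.
      by rewrite opprB addrA subrK.
    apply: le_trans (ler_normD _ _) _; rewrite normrN.
    have [_ _ a1] := hus i; have [_ _ a2] := hus j; lra.
  have e5 : `|gam d| ^+ 2 <= (e i + e j) ^+ 2.
    have := normr_ge0 (gam d); nra.
  have e6 : `|L| * `|gam d| ^+ 2 <= `|L| * (e i + e j) ^+ 2.
    by rewrite ler_wpM2l.
  have := pus i; have := pus j; lra.
have cu : cauchy (us @ \oo).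
  apply: cauchy_exP => eps epsp.
  pose del := sig * eps ^+ 2 / (4 + 4 * `|L|).
  have delp : 0 < del.
    by rewrite /del divr_gt0 ?mulr_gt0 ?exprn_gt0 // ; lra.
  have [N hN] := filter_ex (near_infty_natSinv_lt (PosNum delp)).
  rewrite /= in hN.
  exists (us N); rewrite /fmap /=.
  apply: filterS (nbhs_infty_ge N) => j hj /=; rewrite -ball_normE /ball_ /=.
  have c1 := cauchyb N j; have ej : e j <= e N := inv_succ_mono hj.
  have eN1 : e N <= 1 := inv_succ_le1 N; have ejp : 0 < e j := inv_succ_pos j.
  have Lp := normr_ge0 L.
  have hdel : (4 + 4 * `|L|) * e N < sig * eps ^+ 2.
    have -> : sig * eps ^+ 2 = (4 + 4 * `|L|) * del by rewrite /del; field; lra.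
    by rewrite ltr_pM2l //; lra.
  have bnd2 : 2 * e N + 2 * e j + `|L| * (e N + e j) ^+ 2 <= (4 + 4 * `|L|) * e N.
    have a0 : 0 <= e j by exact: ltW.
    have b0 : 0 <= e N by exact: le_trans a0 ej.
    have ej1 : e j <= 1 by exact: le_trans ej eN1.
    have p1 : e N * e N <= e N by rewrite ler_piMr.
    have p2 : e N * e j <= e N by rewrite ler_piMr.
    have p3 : e j * e j <= e j by rewrite ler_piMr.
    have h5 : (e N + e j) ^+ 2 <= 4 * e N.
      rewrite sqrrD !expr2 mulr2n; lra.
    have : `|L| * (e N + e j) ^+ 2 <= `|L| * (4 * e N) by rewrite ler_wpM2l.
    lra.
  have hd : `|us N - us j| ^+ 2 < eps ^+ 2.
    have : sig * `|us N - us j| ^+ 2 < sig * eps ^+ 2 by lra.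
    by rewrite ltr_pM2l.
  by rewrite -(@ltr_pXn2r _ 2) ?nnegrE // ltW.
have cv : cvg (us @ \oo) by apply: cauchy_cvg; exact: cu.
set v := lim (us @ \oo) in cv.
have close : forall eps, 0 < eps -> exists k, `|v - us k| < eps /\ e k < eps.
  move=> eps epsp.
  have h1 : \forall t \near \oo, `|v - us t| < eps.
    by move/cvgrPdist_lt: cv => /(_ eps epsp).
  have h2 := near_infty_natSinv_lt (PosNum epsp).
  have [k [hk1 hk2]] := filter_ex (filterI h1 h2).
  by exists k.
have pv0 : p v v = 0.
  apply/eqP; rewrite eq_le pnn andbT leNgt; apply/negP => pos.
  pose C := 2 + 2 * (sig + `|M|).
  have Cp : 0 < C by have := normr_ge0 M; rewrite /C; lra.
  pose eps := Num.min 1 (p v v / (2 * C)).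
  have epsp : 0 < eps by rewrite lt_min ltr01 /= divr_gt0 // mulr_gt0.
  have eps1 : eps <= 1 by rewrite /eps ge_min lexx.
  have eps2 : eps <= p v v / (2 * C) by rewrite /eps ge_min lexx orbT.
  have [k [hk1 hk2]] := close eps epsp.
  have hv : p v v <= 2 * p (us k) (us k) + 2 * p (us k - v) (us k - v).
    have := psd_par hp (us k) (us k - v) pnn.
    by have -> : us k - (us k - v) = v by rewrite opprB addrC subrK.
  have hd : `|us k - v| ^+ 2 <= eps.
    rewrite distrC; have := normr_ge0 (v - us k); nra.
  have h3 := pbound (us k - v).
  have h4 : (sig + `|M|) * `|us k - v| ^+ 2 <= (sig + `|M|) * eps.
    by rewrite ler_wpM2l //; have := normr_ge0 M; lra.
  have h5 := pus k.
  have h6 : C * eps <= p v v / 2.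
    have : C * eps <= C * (p v v / (2 * C)) by rewrite ler_wpM2l // ltW.
    have -> : C * (p v v / (2 * C)) = p v v / 2 by field; rewrite gt_eqF.
    by [].
  rewrite /C in h6; lra.
have vn0 : v != 0.
  apply/eqP => v0.
  pose eps := Num.min (1 / 2) (sig / 4).
  have epsp : 0 < eps by rewrite lt_min !divr_gt0.
  have eps1 : eps <= 1 / 2 by rewrite /eps ge_min lexx.
  have eps2 : eps <= sig / 4 by rewrite /eps ge_min lexx orbT.
  have [k [hk1 hk2]] := close eps epsp.
  rewrite v0 sub0r normrN in hk1.
  have [_ hb1 _] := hus k.
  have hb2 := hbnd (us k).
  have : `|us k| ^+ 2 <= 1 / 4 by have := normr_ge0 (us k); nra.
  move=> h4.
  have : sig * `|us k| ^+ 2 <= sig * (1 / 4) by rewrite ler_wpM2l // ltW.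
  lra.
exists sig, v => //; split => // x.
have hx := psd_cs hp v x pnn; rewrite pv0 mul0r in hx.
have : p v x ^+ 2 = 0 by apply/eqP; rewrite eq_le hx sqr_ge0.
by move/eqP; rewrite sqrf_eq0 => /eqP; rewrite /p; lra.
Qed.

End Max.


Section Riesz.
Variables (R : realType) (V : completeNormedModType R) (H : normedModType R).
Variables (ipV : V -> V -> R) (ipH : H -> H -> R) (gam : V -> H) (Cg : R).
Hypothesis hipV : is_inner_product ipV.
Hypothesis hipH : is_inner_product ipH.
Hypothesis gam_lin : linear gam.
Hypothesis gam_comp : compact_operator gam.
Hypothesis hCg : forall v, `|gam v| <= Cg * `|v|.

Lemma riesz u : exists z, forall x, ipV z x = ipH (gam u) (gam x).
Proof.
have sV := ip_sbil hipV; have sH := ip_sbil hipH.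
pose f x := ipH (gam u) (gam x).
have [f0|] := pselect (forall x, f x = 0).
  by exists 0 => x; rewrite (sb0l sV); symmetry; exact: f0 x.
move=> /existsNP [x0 hx0].
pose b x y := f x * f y.
have hf : forall a x y, f (a *: x + y) = a * f x + f y.
  by move=> a x y; rewrite /f gam_lin (sbDr sH) (sbZr sH).
have hb : sbil b.
  split; first by move=> a x y w; rewrite /b hf; ring.
  by move=> x y; rewrite /b mulrC.
have hfx : forall x, `|f x| <= `|gam u| * `|gam x| by move=> x; exact: ip_cs.
have nu := normr_ge0 (gam u).
have hM : forall x, `|b x x| <= `|gam u| ^+ 2 * Cg ^+ 2 * `|x| ^+ 2.
  move=> x; rewrite /b normrM -expr2.
  have h1 := hfx x; have h2 := hCg x; have h3 := normr_ge0 (gam x).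
  have h4 := normr_ge0 x; have h5 := normr_ge0 (f x).
  have h6 : `|gam u| * `|gam x| <= `|gam u| * (Cg * `|x|) by rewrite ler_wpM2l.
  have h7 : `|f x| <= `|gam u| * Cg * `|x| by rewrite -mulrA; lra.
  have h8 : `|f x| ^+ 2 <= (`|gam u| * Cg * `|x|) ^+ 2.
    by rewrite ler_pXn2r ?nnegrE //; lra.
  by move: h8; rewrite !exprMn.
have hL : forall x, b x x <= `|gam u| ^+ 2 * `|gam x| ^+ 2.
  move=> x; rewrite /b -expr2 -(real_normK (num_real (f x))).
  have h1 := hfx x; have h5 := normr_ge0 (f x).
  have h8 : `|f x| ^+ 2 <= (`|gam u| * `|gam x|) ^+ 2.
    by rewrite ler_pXn2r ?nnegrE // mulr_ge0.
  by move: h8; rewrite exprMn.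
have h0 : 0 < b x0 x0.
  rewrite /b -expr2 exprn_even_gt0 //.
  by apply/eqP.
have [sig [v vn0 [sigp _ heig]]] := maxlemma hipV gam_lin gam_comp hb hM hL h0.
have fv : f v != 0.
  apply/eqP => fv0; have := heig v; rewrite /b fv0 mul0r (ip_norm hipV) => h.
  have : 0 < `|v| by rewrite normr_gt0.
  move=> hv; have : 0 < sig * `|v| ^+ 2 by rewrite mulr_gt0 // exprn_gt0.
  lra.
exists ((sig / f v) *: v) => x; rewrite (sbZl sV).
by apply: (mulfI fv); rewrite -[RHS]/(b v x) heig; field.
Qed.
End Riesz.


Section Arith.
Variable R : realType.

Lemma eig_arith (lam1 lamstar k sig : R) :
  0 < lam1 -> 0 < k -> k <= lam1^-1 ->
  ((lam1 - lamstar) / lam1) ^+ 2 <= (1 - lamstar * k) ^+ 2 ->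
  lam1 * lamstar ^+ 2 * k ^+ 2 - (2 * lam1 * lamstar + (lamstar - lam1) ^+ 2) * k + sig = 0 ->
  sig <= lam1.
Proof.
move=> lam1p kp hk1 hs2 hk.
have f1 : (lamstar - lam1) ^+ 2 * k <= (lamstar - lam1) ^+ 2 * lam1^-1.
  by rewrite ler_wpM2l ?sqr_ge0.
have f2 : lam1 * ((lam1 - lamstar) / lam1) ^+ 2 <= lam1 * (1 - lamstar * k) ^+ 2.
  by rewrite ler_wpM2l // ltW.
have f3 : lam1 * ((lam1 - lamstar) / lam1) ^+ 2 = (lamstar - lam1) ^+ 2 * lam1^-1.
  by field; rewrite gt_eqF.
have f5 : lam1 - ((2 * lam1 * lamstar + (lamstar - lam1) ^+ 2) * k - lam1 * lamstar ^+ 2 * k ^+ 2) =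
  lam1 * (1 - lamstar * k) ^+ 2 - (lamstar - lam1) ^+ 2 * k by ring.
lra.
Qed.

Lemma disc_arith (bet del sig t s c : R) :
  0 < del -> 0 < c -> bet * t - del * s = sig * c -> t ^+ 2 <= s * c ->
  0 <= bet ^+ 2 - 4 * del * sig.
Proof.
move=> delp cp idv cs.
rewrite leNgt; apply/negP => Dn.
have q1 : del * t ^+ 2 <= del * (s * c) by rewrite ler_wpM2l // ltW.
have q2 : del * (s * c) = (bet * t - sig * c) * c.
  by rewrite mulrA; congr (_ * _); lra.
have q3 : 0 < (4 * del * sig - bet ^+ 2) * c ^+ 2.
  by rewrite mulr_gt0 ?exprn_gt0 //; lra.
have q4 : 0 <= (2 * del * t - bet * c) ^+ 2 := sqr_ge0 _.
have E : 4 * del * (del * t ^+ 2 - bet * c * t + sig * c ^+ 2) =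
  (2 * del * t - bet * c) ^+ 2 + (4 * del * sig - bet ^+ 2) * c ^+ 2 by ring.
have q5 : del * t ^+ 2 - bet * c * t + sig * c ^+ 2 <= 0.
  have : (bet * t - sig * c) * c = bet * c * t - sig * c ^+ 2 by ring.
  lra.
have q6 : 4 * del * (del * t ^+ 2 - bet * c * t + sig * c ^+ 2) <= 0.
  by rewrite mulr_ge0_le0 // mulr_ge0 // ltW.
lra.
Qed.

Lemma key_arith (x y c d : R) : x - d <= y -> x - c <= y - c + d.
Proof. by move=> h; lra. Qed.

Lemma final_arith (lam1 lamstar m Cg A B a w : R) :
  0 < lam1 -> 0 < m -> m ^+ 2 = lam1 -> m * Cg = 1 -> 0 <= A -> 0 <= B -> 0 < a ->
  0 <= w -> B < lamstar * a -> w <= A + Cg * B ->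
  (lamstar - lam1) ^+ 2 * a ^+ 2 <= lam1 * w ^+ 2 ->
  let alpha := A / a in
  let beta := B / a in
  let X2 := (- alpha + Num.sqrt (alpha ^+ 2 + 4 * (lamstar - beta))) / 2 in
  X2 ^+ 2 <= lam1 /\ Cg <= 1 / X2.
Proof.
move=> lam1p mp m2 mCg hA hB ap w0 hBl hwAB key alpha beta X2.
have a0 : 0 <= a := ltW ap.
have key2 : (lamstar - lam1) * a <= m * w.
  have mw : 0 <= m * w by rewrite mulr_ge0 // ltW.
  have [hl|hl] := lerP (lamstar - lam1) 0.
    by apply: le_trans mw; rewrite mulr_le0_ge0.
  have ee1 : ((lamstar - lam1) * a) ^+ 2 <= (m * w) ^+ 2.
    by rewrite !exprMn m2.
  exact: sq_le mw ee1.
have key3 : (lamstar - lam1) * a <= m * A + B.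
  have : m * w <= m * (A + Cg * B) by rewrite ler_wpM2l // ltW.
  have e : m * (A + Cg * B) = m * A + (m * Cg) * B by ring.
  rewrite e mCg mul1r; lra.
have key4 : lamstar - m ^+ 2 <= m * alpha + beta.
  rewrite -(ler_pM2r ap) m2.
  have -> : (m * alpha + beta) * a = m * A + B by rewrite /alpha /beta; field; rewrite gt_eqF.
  lra.
have bl : beta < lamstar by rewrite /beta ltr_pdivrMr // mulrC.
have alpha0 : 0 <= alpha by rewrite /alpha divr_ge0.
have sQ0 := sqrtr_ge0 (alpha ^+ 2 + 4 * (lamstar - beta)).
have sQ2 : Num.sqrt (alpha ^+ 2 + 4 * (lamstar - beta)) ^+ 2 = alpha ^+ 2 + 4 * (lamstar - beta).
  by rewrite sqr_sqrtr // addr_ge0 ?sqr_ge0 //; lra.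
have sQ : Num.sqrt (alpha ^+ 2 + 4 * (lamstar - beta)) <= alpha + 2 * m.
  have : alpha ^+ 2 + 4 * (lamstar - beta) <= (alpha + 2 * m) ^+ 2.
    have e : (alpha + 2 * m) ^+ 2 = alpha ^+ 2 + 4 * (m ^+ 2 + m * alpha) by ring.
    rewrite e; lra.
  move=> hQ; apply: sq_le; first lra.
  by rewrite sQ2.
have sQa : alpha < Num.sqrt (alpha ^+ 2 + 4 * (lamstar - beta)).
  apply: sq_lt alpha0 sQ0 _; rewrite sQ2; lra.
have X2p : 0 < X2 by rewrite /X2; lra.
have X2m : X2 <= m by rewrite /X2; lra.
split.
  by rewrite -m2; apply: le_sq (ltW X2p) X2m.
have mn0 : m != 0 by rewrite gt_eqF.
have -> : Cg = m^-1 by apply: (mulfI mn0); rewrite mCg mulfV.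
by rewrite div1r lef_pV2 ?posrE.
Qed.

End Arith.

Unset Implicit Arguments.

Theorem theorem3p4 (R : realType)
  (V H : completeNormedModType R)
  (ipV : V -> V -> R) (ipH : H -> H -> R)
  (hipV : is_inner_product ipV) (hipH : is_inner_product ipH)
  (gam : V -> H) (gam_lin : linear gam) (gam_cont : continuous gam)
  (gam_comp : compact_operator gam)
  (lam1 : R)
  (lam1_eig : is_eigenvalue ipV ipH gam lam1)
  (lam1_min : forall lam, is_eigenvalue ipV ipH gam lam -> lam1 <= lam)
  (Cg : R) (hCg : is_smallest_bound gam Cg)
  (ustar : V) (lamstar : R) (w : V)
  (hw : forall v : V, ipV w v = ipV ustar v - lamstar * ipH (gam ustar) (gam v))
  (hsep : forall lam, is_eigenvalue ipV ipH gam lam ->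
     `|(lam1 - lamstar) / lam1| <= `|(lam - lamstar) / lam|)
  (A B : R) (hA : 0 <= A) (hB : 0 <= B)
  (hBl : B < lamstar * `|gam ustar|)
  (hwAB : `|w| <= A + Cg * B) :
  let alpha := A / `|gam ustar| in
  let beta := B / `|gam ustar| in
  let X2 := (- alpha + Num.sqrt (alpha ^+ 2 + 4 * (lamstar - beta))) / 2 in
  X2 ^+ 2 <= lam1 /\ Cg <= 1 / X2.
Proof.
move=> alpha beta X2.
case: hCg => hCg1 hCg2.
have sV := ip_sbil hipV; have sH := ip_sbil hipH.
have nV := ip_norm hipV; have nH := ip_norm hipH.
have [u1 u1n0 hu1] := lam1_eig.
have u1p : 0 < `|u1| by rewrite normr_gt0.
have e1 : `|u1| ^+ 2 = lam1 * `|gam u1| ^+ 2 by rewrite -nV -nH hu1.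
have g1 := normr_ge0 (gam u1).
have u1sq : 0 < `|u1| ^+ 2 by rewrite exprn_gt0.
have lam1p : 0 < lam1.
  rewrite ltNge; apply/negP => hl.
  have : lam1 * `|gam u1| ^+ 2 <= 0 by rewrite mulr_le0_ge0 // exprn_ge0.
  lra.
have gu1p : 0 < `|gam u1|.
  rewrite lt_def g1 andbT; apply/eqP => g0; move: e1; rewrite g0 expr0n /= mulr0.
  lra.
have Cgp : 0 < Cg.
  have h := hCg1 u1; rewrite ltNge; apply/negP => hc.
  have : Cg * `|u1| <= 0 by rewrite mulr_le0_ge0 // ltW.
  move: gu1p; lra.
have CgL : 1 <= lam1 * Cg ^+ 2.
  have h := hCg1 u1.
  have h2 : `|gam u1| ^+ 2 <= (Cg * `|u1|) ^+ 2 by rewrite ler_pXn2r ?nnegrE //; lra.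
  rewrite exprMn in h2.
  have h3 : lam1 * `|gam u1| ^+ 2 <= lam1 * (Cg ^+ 2 * `|u1| ^+ 2) by rewrite ler_wpM2l // ltW.
  rewrite -e1 in h3.
  have : `|u1| ^+ 2 * 1 <= `|u1| ^+ 2 * (lam1 * Cg ^+ 2) by rewrite mulr1; move: h3; rewrite mulrA mulrC.
  by rewrite ler_pM2l.
pose b1 x y := ipH (gam x) (gam y).
have hb1 : sbil b1.
  split; first by move=> a x y z; rewrite /b1 gam_lin sH.1.
  by move=> x y; rewrite /b1 sH.2.
have hM1 : forall x, `|b1 x x| <= Cg ^+ 2 * `|x| ^+ 2.
  move=> x; rewrite /b1 nH ger0_norm ?exprn_ge0 // -exprMn.
  by rewrite ler_pXn2r ?nnegrE ?mulr_ge0 // ltW.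
have hL1 : forall x, b1 x x <= 1 * `|gam x| ^+ 2 by move=> x; rewrite /b1 nH mul1r.
have h01 : 0 < b1 u1 u1 by rewrite /b1 nH exprn_gt0.
have [sig1 [v1 v1n0 [sig1p hsig1 heig1]]] := maxlemma hipV gam_lin gam_comp hb1 hM1 hL1 h01.
have lsig : lam1 <= sig1^-1.
  apply: lam1_min; exists v1 => // x.
  by rewrite -[ipH _ _]/(b1 v1 x) heig1 mulrA mulVf ?mul1r // gt_eqF.
have Cgs : Cg ^+ 2 <= sig1.
  have : Cg <= Num.sqrt sig1.
    apply: hCg2 => v; have h := hsig1 v; rewrite /b1 nH in h.
    rewrite -(@ler_pXn2r _ 2) ?nnegrE ?mulr_ge0 ?sqrtr_ge0 //.
    by rewrite exprMn sqr_sqrtr // ltW.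
  move=> h.
  have h' : Cg ^+ 2 <= (Num.sqrt sig1) ^+ 2 by rewrite ler_pXn2r ?nnegrE ?sqrtr_ge0 // ltW.
  by rewrite sqr_sqrtr in h'; last exact: ltW.
have lamCg : lam1 * Cg ^+ 2 = 1.
  have h1 : lam1 * sig1 <= 1.
    by move: lsig; rewrite -(ler_pM2r sig1p) mulVf // gt_eqF.
  have h2 : lam1 * Cg ^+ 2 <= lam1 * sig1 by rewrite ler_wpM2l // ltW.
  lra.
pose m := Cg^-1.
have mp : 0 < m by rewrite invr_gt0.
have m2 : m ^+ 2 = lam1.
  by rewrite /m exprVn; apply: (mulIf (x := Cg ^+ 2)); rewrite ?mulVf ?lamCg // expf_neq0 // gt_eqF.
have mCg : m * Cg = 1 by rewrite /m mulVf // gt_eqF.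
have [K hK] : exists K : V -> V, forall u x, ipV (K u) x = ipH (gam u) (gam x).
  have := fun u => riesz hipV hipH gam_lin gam_comp hCg1 u.
  by move=> /choice [K hK]; exists K.
have hK2 : forall u y, ipV (K u) (K y) = ipV (K (K u)) y.
  by move=> u y; rewrite sV.2 !hK sH.2.
have Knorm : forall x, `|K x| <= Cg ^+ 2 * `|x|.
  move=> x; have h := nV (K x); rewrite hK in h.
  have h1 := ip_cs hipH (gam x) (gam (K x)).
  have h2 := hCg1 x; have h3 := hCg1 (K x).
  have h4 : `|gam x| * `|gam (K x)| <= (Cg * `|x|) * (Cg * `|K x|).
    by rewrite ler_pM.
  rewrite h ger0_norm ?exprn_ge0 // in h1.
  have [k0|kn] := eqVneq `|K x| 0; first by rewrite k0 mulr_ge0 ?normr_ge0 ?exprn_ge0 ?ltW.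
  have kp : 0 < `|K x| by rewrite lt_def kn normr_ge0.
  have : `|K x| * `|K x| <= `|K x| * (Cg ^+ 2 * `|x|).
    have e : (Cg * `|x|) * (Cg * `|K x|) = `|K x| * (Cg ^+ 2 * `|x|) by ring.
    by rewrite -expr2 -e; exact: le_trans h1 h4.
  by rewrite ler_pM2l.
pose a := `|gam ustar|.
have a0 : 0 <= a := normr_ge0 _.
have ap : 0 < a.
  rewrite lt_def a0 andbT; apply/eqP => az; move: hBl; rewrite -/a az mulr0; lra.
have lsp : 0 < lamstar by move: hBl; rewrite -/a => /(le_lt_trans hB); rewrite pmulr_lgt0.
pose bet := 2 * lam1 * lamstar + (lamstar - lam1) ^+ 2.
pose del := lam1 * lamstar ^+ 2.
have delp : 0 < del by rewrite /del mulr_gt0 // exprn_gt0.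
have betp : 0 <= bet.
  have := mulr_gt0 lam1p lsp; have := sqr_ge0 (lamstar - lam1); rewrite /bet; lra.
pose b2 x y := bet * ipH (gam x) (gam y) - del * ipV (K x) (K y).
have hb2 : sbil b2.
  split; first by move=> c x y z; rewrite /b2 !hK gam_lin !sH.1; ring.
  by move=> x y; rewrite /b2 sH.2 sV.2.
have hM2 : forall x, `|b2 x x| <= (bet * Cg ^+ 2 + del * (Cg ^+ 2) ^+ 2) * `|x| ^+ 2.
  move=> x; rewrite /b2 nH nV.
  have g0 : 0 <= bet * `|gam x| ^+ 2 by rewrite mulr_ge0 // exprn_ge0.
  have k0 : 0 <= del * `|K x| ^+ 2 by rewrite mulr_ge0 ?exprn_ge0 // ltW.
  have h1 : `|gam x| ^+ 2 <= (Cg * `|x|) ^+ 2.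
    exact: le_sq (normr_ge0 _) (hCg1 x).
  have h2 : `|K x| ^+ 2 <= (Cg ^+ 2 * `|x|) ^+ 2.
    exact: le_sq (normr_ge0 _) (Knorm x).
  have h3 : bet * `|gam x| ^+ 2 <= bet * (Cg * `|x|) ^+ 2 by rewrite ler_wpM2l.
  have h4 : del * `|K x| ^+ 2 <= del * (Cg ^+ 2 * `|x|) ^+ 2 by rewrite ler_wpM2l // ltW.
  have e : (bet * Cg ^+ 2 + del * (Cg ^+ 2) ^+ 2) * `|x| ^+ 2 =
    bet * (Cg * `|x|) ^+ 2 + del * (Cg ^+ 2 * `|x|) ^+ 2 by ring.
  rewrite e ler_norml; apply/andP; split; lra.
have hL2 : forall x, b2 x x <= bet * `|gam x| ^+ 2.
  move=> x; rewrite /b2 nH nV.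
  have : 0 <= del * `|K x| ^+ 2 by rewrite mulr_ge0 ?exprn_ge0 // ltW.
  lra.
have step2 : forall u, b2 u u <= lam1 * `|u| ^+ 2.
  move=> u; rewrite leNgt; apply/negP => hu.
  have h0 : 0 < b2 u u.
    have h00 : 0 <= lam1 * `|u| ^+ 2 by rewrite mulr_ge0 ?exprn_ge0 // ltW.
    exact: le_lt_trans h00 hu.
  have [sig [v vn0 [sigp hsig heig]]] := maxlemma hipV gam_lin gam_comp hb2 hM2 hL2 h0.
  have un0 : u != 0 by apply/eqP => u0; move: h0; rewrite u0 (sb0l hb2) ltxx.
  have usq : 0 < `|u| ^+ 2 by rewrite exprn_gt0 // normr_gt0.
  have siglam : lam1 < sig.
    by rewrite -(ltr_pM2r usq); exact: lt_le_trans hu (hsig u).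
  have ident : forall y, bet * ipV (K v) y - del * ipV (K (K v)) y = sig * ipV v y.
    by move=> y; have := heig y; rewrite /b2 hK2 -hK.
  set z1 := K v in ident; set z2 := K z1 in ident.
  pose c0 := ipV v v; pose t := ipV z1 v; pose s := ipV z1 z1.
  have a0p : 0 < c0 by rewrite /c0 nV exprn_gt0 // normr_gt0.
  have hz2v : ipV z2 v = s by rewrite /z2 /z1 /s -hK2.
  have idv : bet * t - del * s = sig * c0 by rewrite -hz2v; exact: ident v.
  have cs : t ^+ 2 <= s * c0 by exact: psd_cs sV z1 v (ip_nn hipV).
  pose D := bet ^+ 2 - 4 * del * sig.
  have Dnn : 0 <= D := disc_arith delp a0p idv cs.
  have [k1 [k2 [hsum hprod]]] : exists k1 k2, bet = del * (k1 + k2) /\ sig = del * k1 * k2.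
    exists ((bet + Num.sqrt D) / (2 * del)), ((bet - Num.sqrt D) / (2 * del)).
    have dn0 : del != 0 by rewrite gt_eqF.
    split; first by field.
    have sD := sqr_sqrtr Dnn.
    have -> : del * ((bet + Num.sqrt D) / (2 * del)) * ((bet - Num.sqrt D) / (2 * del)) =
      (bet ^+ 2 - Num.sqrt D ^+ 2) / (4 * del) by field.
    by rewrite sD /D; field.
  have dn0 : del != 0 by rewrite gt_eqF.
  have [z [k [zn0 hk hzk]]] : exists z k, [/\ z != 0,
      del * k ^+ 2 - bet * k + sig = 0 &
      forall y, ipH (gam z) (gam y) = k * ipV z y].
    have [x0|xn0] := eqVneq (z1 - k2 *: v) 0.
      exists v, k2; split => //; first by rewrite hsum hprod; ring.
      move=> y; rewrite -hK -/z1.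
      have -> : z1 = k2 *: v by apply/eqP; rewrite -subr_eq0 x0.
      by rewrite (sbZl sV).
    exists (z1 - k2 *: v), k1; split => //; first by rewrite hsum hprod; ring.
    move=> y.
    have -> : z1 - k2 *: v = (- k2) *: v + z1 by rewrite addrC scaleNr.
    rewrite gam_lin sH.1 -!hK -/z1 -/z2 (sbDl sV) !(sbZl sV).
    have iy := ident y.
    apply: (mulfI dn0).
    have e2 : del * ipV z2 y = bet * ipV z1 y - sig * ipV v y by rewrite -iy; ring.
    rewrite mulrDr e2 hsum hprod; ring.
  have kn0 : k != 0.
    apply/eqP => k0; move: hk; rewrite k0 expr0n /= !mulr0 subr0 add0r => s0.
    by move: sigp; rewrite s0 ltxx.
  have hev : is_eigenvalue ipV ipH gam k^-1.
    by exists z => // y; rewrite hzk mulrA mulVf ?mul1r.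
  have hl : lam1 <= k^-1 := lam1_min _ hev.
  have kp : 0 < k by rewrite -invr_gt0; exact: lt_le_trans lam1p hl.
  have hs := hsep _ hev.
  have ek : (k^-1 - lamstar) / k^-1 = 1 - lamstar * k by field.
  rewrite ek in hs.
  have hs2 : ((lam1 - lamstar) / lam1) ^+ 2 <= (1 - lamstar * k) ^+ 2.
    rewrite -(real_normK (num_real ((lam1 - lamstar) / lam1))).
    rewrite -(real_normK (num_real (1 - lamstar * k))).
    exact: le_sq (normr_ge0 _) hs.
  have hk1 : k <= lam1^-1.
    by rewrite -[k]invrK lef_pV2 ?posrE ?invr_gt0.
  have := eig_arith lam1p kp hk1 hs2 hk.
  by rewrite leNgt siglam.
pose sst := ipV (K ustar) (K ustar).
have hwn : `|w| ^+ 2 = `|ustar| ^+ 2 - 2 * lamstar * a ^+ 2 + lamstar ^+ 2 * sst.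
  have h1 := hw w.
  have h2 : ipV ustar w = `|ustar| ^+ 2 - lamstar * a ^+ 2.
    by rewrite sV.2 hw nV nH.
  have s1 : ipH (gam ustar) (gam w) = ipV w (K ustar) by rewrite -hK sV.2.
  have s2 : ipV ustar (K ustar) = a ^+ 2 by rewrite sV.2 hK nH.
  have s3 : ipH (gam ustar) (gam (K ustar)) = sst by rewrite -hK.
  have h3 : ipH (gam ustar) (gam w) = a ^+ 2 - lamstar * sst.
    by rewrite s1 hw s2 s3.
  rewrite -nV h1 h2 h3; ring.
have key : (lamstar - lam1) ^+ 2 * a ^+ 2 <= lam1 * `|w| ^+ 2.
  have h := step2 ustar; rewrite /b2 nH -/a -/sst in h.
  have ee1 : lam1 * `|w| ^+ 2 = lam1 * `|ustar| ^+ 2 - 2 * lam1 * lamstar * a ^+ 2 + del * sst.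
    by rewrite hwn /del; ring.
  have ee2 : bet * a ^+ 2 = 2 * lam1 * lamstar * a ^+ 2 + (lamstar - lam1) ^+ 2 * a ^+ 2.
    by rewrite /bet; ring.
  have ee3 : (lamstar - lam1) ^+ 2 * a ^+ 2 = bet * a ^+ 2 - 2 * lam1 * lamstar * a ^+ 2.
    by rewrite ee2; ring.
  by rewrite ee1 ee3; apply: key_arith.
have w0 := normr_ge0 w.
exact: (final_arith lam1p mp m2 mCg hA hB ap w0 hBl hwAB key).
Qed.
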